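(* The schema $\langle[G\cup H]\rangle\varphi\rightarrow\langle[G]\rangle\langle[H]\rangle\varphi$ is not valid: with $A=\{a,b,c\}$, $G=\{a\}$, $H=\{b\}$, $P\supseteq\{p,q,r\}$ and $\varphi:=K_b(p\wedge q\wedge r)\wedge\neg K_a(p\wedge q\wedge r)\wedge\neg K_c(p\wedge q\wedge r)$, there is a pointed epistemic model $(M,w)$ with $(M,w)\models\langle[\{a,b\}]\rangle\varphi$ and $(M,w)\not\models\langle[\{a\}]\rangle\langle[\{b\}]\rangle\varphi$. (For instance, $W=\{pqr,pq\bar r,\bar pqr,p\bar qr\}$ with each state's name giving the truth values of $p,q,r$, $w=pqr$, $\sim_a$ identifying $pqr$ and $\bar pqr$, $\sim_b$ identifying $pqr$ and $p\bar qr$, $\sim_c$ identifying $pqr$, $pq\bar r$, $\bar pqr$, all relations reflexive otherwise.)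
   Context: Fix a finite set $A$ of agents and a countable set $P$ of propositional variables. The language $\mathcal{L}_{CoRGAL}$ is given by $\varphi ::= p \mid \neg\varphi \mid (\varphi\wedge\varphi) \mid K_a\varphi \mid [\varphi]\varphi \mid [G,\varphi]\varphi \mid [\langle G\rangle]\varphi$ with $p\in P$, $a\in A$, $G\subseteq A$. $\mathcal{L}_{EL}$ is the fragment built only from $p,\neg,\wedge,K_a$. Duals: $\langle\psi\rangle\varphi:=\neg[\psi]\neg\varphi$, $\langle[G]\rangle\varphi:=\neg[\langle G\rangle]\neg\varphi$. For $G\subseteq A$, $\mathcal{L}^G_{EL}$ is the set of formulas $\bigwedge_{i\in G}K_i\varphi_i$ with each $\varphi_i\in\mathcal{L}_{EL}$; $\psi_G,\chi_G$ range over $\mathcal{L}^G_{EL}$. Epistemic models $M=(W,\sim,V)$: $W\neq\emptyset$, each $\sim_a$ an equivalence relation, $V:P\to\mathcal{P}(W)$; $M^\varphi$ is the restriction of $M$ to $\{v:(M,v)\models\varphi\}$. Semantics: standard for $p,\neg,\wedge,K_a$; $(M,w)\models[\varphi]\psi$ iff $(M,w)\models\varphi$ implies $(M^\varphi,w)\models\psi$; $(M,w)\models[\langle G\rangle]\varphi$ iff for every $\psi_G$ there is $\chi_{A\setminus G}$ with $(M,w)\models\psi_G\to\langle\psi_G\wedge\chi_{A\setminus G}\rangle\varphi$. Thus $(M,w)\models\langle[G]\rangle\varphi$ iff there is $\psi_G$ such that for all $\chi_{A\setminus G}$, $(M,w)\models\psi_G\wedge[\psi_G\wedge\chi_{A\setminus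 G}]\varphi$. A formula is valid if true at every pointed model. *)

(* Defs.v *)
From Stdlib Require Import List Bool.
Import ListNotations.

Inductive agent : Type := ag_a | ag_b | ag_c.
Definition agents : list agent := [ag_a; ag_b; ag_c].

Definition coalition := agent -> bool.

Definition pvar_p : nat := 0.
Definition pvar_q : nat := 1.
Definition pvar_r : nat := 2.

Inductive elform : Type :=
| ELVar (p : nat)
| ELNeg (f : elform)
| ELAnd (f g : elform)
| ELK (i : agent) (f : elform).

(* The language (the [G,phi]psi constructor is omitted). *)
Inductive form : Type :=
| Var (p : nat)
| Neg (f : form)
| And (f g : form)
| K (i : agent) (f : form)
| Ann (f g : form)
| GA (G : coalition) (f : form).

Record model : Type := {
  world : Type;
  rel : agent -> world -> world -> Prop;
  val : nat -> world -> Prop;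
  world_nonempty : inhabited world;
  rel_refl : forall i x, rel i x x;
  rel_sym : forall i x y, rel i x y -> rel i y x;
  rel_trans : forall i x y z, rel i x y -> rel i y z -> rel i x z
}.

(* Truth in the submodel of M with domain D (D is the set of surviving
   worlds after successive announcements). *)
Fixpoint sat_el (M : model) (D : world M -> Prop) (w : world M) (f : elform)
  : Prop :=
  match f with
  | ELVar p => val M p w
  | ELNeg g => ~ sat_el M D w g
  | ELAnd g h => sat_el M D w g /\ sat_el M D w h
  | ELK i g => forall v, D v -> rel M i w v -> sat_el M D v g
  end.

Definition elTop : elform := ELNeg (ELAnd (ELVar 0) (ELNeg (ELVar 0))).

Fixpoint bigconjK (l : list agent) (f : agent -> elform) : elform :=
  match l with
  | [] => elTop
  | [i] => ELK i (f i)
  | i :: l' => ELAnd (ELK i (f i)) (bigconjK l' f)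
  end.

Definition psiG (G : coalition) (f : agent -> elform) : elform :=
  bigconjK (filter G agents) f.
Definition chiCoG (G : coalition) (g : agent -> elform) : elform :=
  bigconjK (filter (fun i => negb (G i)) agents) g.

Fixpoint sat (M : model) (D : world M -> Prop) (w : world M) (f : form)
  : Prop :=
  match f with
  | Var p => val M p w
  | Neg g => ~ sat M D w g
  | And g h => sat M D w g /\ sat M D w h
  | K i g => forall v, D v -> rel M i w v -> sat M D v g
  | Ann g h => sat M D w g -> sat M (fun v => D v /\ sat M D v g) w h
  | GA G g =>
      forall fs : agent -> elform,
      exists gs : agent -> elform,
        (* (M,w) |= psi_G -> <psi_G /\ chi_{A\G}> g *)
        sat_el M D w (psiG G fs) ->
        ~ (sat_el M D w (ELAnd (psiG G fs) (chiCoG G gs)) ->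
           ~ sat M (fun v => D v /\ sat_el M D v (ELAnd (psiG G fs) (chiCoG G gs)))
                 w g)
  end.

Definition models (M : model) (w : world M) (f : form) : Prop :=
  sat M (fun _ => True) w f.

Definition DGA (G : coalition) (f : form) : form := Neg (GA G (Neg f)).

Definition G_ab : coalition := fun i => match i with ag_c => false | _ => true end.
Definition G_a : coalition := fun i => match i with ag_a => true | _ => false end.
Definition G_b : coalition := fun i => match i with ag_b => true | _ => false end.

Definition pqr : form := And (Var pvar_p) (And (Var pvar_q) (Var pvar_r)).
Definition phi7 : form :=
  And (K ag_b pqr) (And (Neg (K ag_a pqr)) (Neg (K ag_c pqr))).

(* Main.v *)
Require Import Defs.
From Stdlib Require Import List Bool.
Import ListNotations.

Inductive W4 : Type := ww | wx | wy | wz.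

Definition cls (i : agent) (u : W4) : nat :=
  match i, u with
  | ag_a, ww => 0 | ag_a, wy => 0 | ag_a, wx => 1 | ag_a, wz => 2
  | ag_b, ww => 0 | ag_b, wz => 0 | ag_b, wx => 1 | ag_b, wy => 2
  | ag_c, wz => 1 | ag_c, _ => 0
  end.

Definition valb (n : nat) (u : W4) : bool :=
  match n, u with
  | 0, wy => false | 0, _ => true
  | 1, wz => false | 1, _ => true
  | 2, wx => false | 2, _ => true
  | _, _ => false
  end.

Definition M4 : model.
Proof.
  refine {| world := W4; rel := fun i u v => cls i u = cls i v;
            val := fun n u => valb n u = true;
            world_nonempty := inhabits ww |}.
  - reflexivity.
  - intros; congruence.
  - intros; congruence.
Defined.

Lemma elTop_true D v : sat_el M4 D v elTop.
Proof. simpl. tauto. Qed.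

Ltac cases_rel :=
  let v := fresh "v" in let Dv := fresh "Dv" in let Hr := fresh "Hr" in
  intros v Dv Hr; destruct v; simpl in Hr; try discriminate.

Theorem mainTheorem7 :
  exists (M : model) (w : world M),
    models M w (DGA G_ab phi7) /\
    ~ models M w (DGA G_a (DGA G_b phi7)).
Proof.
  exists M4, ww. split.
  - unfold models, DGA. simpl. intro H.
    destruct (H (fun i => match i with ag_a => ELVar 1 | _ => elTop end)) as [gs Hg].
    simpl in Hg. apply Hg.
    + split; [cases_rel; reflexivity | cases_rel; simpl; tauto].
    + intros Q Hn. apply Hn. clear Hn.
      destruct Q as [_ Qc].
      assert (Hc : forall u, cls ag_c u = 0 -> sat_el M4 (fun _ => True) u (ELK ag_c (gs ag_c))).
      { intros u Hu v' Dv' Hr. apply Qc; auto. simpl in *. congruence. }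
      split; [|split].
      * cases_rel; destruct Dv as [_ [[Ha _] _]].
        -- simpl. repeat split; reflexivity.
        -- exfalso. specialize (Ha wz I eq_refl). simpl in Ha. discriminate.
      * intro K. specialize (K wy). simpl in K.
        assert (Hp : sat M4 (fun v => True /\ sat_el M4 (fun _ => True) v (ELAnd (psiG G_ab (fun i => match i with ag_a => ELVar 1 | _ => elTop end)) (chiCoG G_ab gs))) wy pqr).
        { apply K; [|reflexivity]. split; [exact I|]. split; [split|].
          - cases_rel; reflexivity.
          - cases_rel; simpl; tauto.
          - exact (Hc wy eq_refl). }
        simpl in Hp. destruct Hp as [? [? ?]]. discriminate.
      * intro K. specialize (K wx). simpl in K.
        assert (Hp : sat M4 (fun v => True /\ sat_el M4 (fun _ => True) v (ELAnd (psiG G_ab (fun i => match i with ag_a => ELVar 1 | _ => elTop end)) (chiCoG G_ab gs))) wx pqr).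
        { apply K; [|reflexivity]. split; [exact I|]. split; [split|].
          - cases_rel; reflexivity.
          - cases_rel; simpl; tauto.
          - exact (Hc wx eq_refl). }
        simpl in Hp. destruct Hp as [? [? ?]]. discriminate.
  - unfold models, DGA. simpl. intro H. apply H. intro fs.
    exists (fun i => match i with ag_b => ELVar 0 | _ => elTop end).
    simpl. intros Pa HQ. apply HQ.
    + split; [exact Pa|]. split; [cases_rel; reflexivity | cases_rel; simpl; tauto].
    + intro HnX. apply HnX. intro fs2. exists (fun _ => elTop). simpl. intros Pb HQb. apply HQb.
      * split; [exact Pb|]. split; cases_rel; simpl; tauto.
      * intros [_ [Ka _]]. apply Ka.
        cases_rel.
        -- repeat split; reflexivity.
        -- destruct Dv as [[_ [_ [Kb _]]] _]. exfalso.
           specialize (Kb wy I eq_refl). simpl in Kb. discriminate.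
Qed.
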